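(* Let $G$ be a connected graph. Then: (i) $\mu_t(G)=n(G)$ if and only if $G$ is a complete graph; (ii) $\mu_t(G)=n(G)-1$ if and only if $G$ is a non-complete graph with domination number $\gamma(G)=1$ (i.e., $G$ is non-complete and has a vertex adjacent to all other vertices).
   Context: All graphs are finite, simple and undirected; $n(G)$ denotes the order of $G$ and $\gamma(G)$ its domination number. Let $G$ be a connected graph and $X\subseteq V(G)$. Two vertices $x,y\in V(G)$ are $X$-visible if there exists a shortest $x,y$-path in $G$ none of whose internal vertices (i.e., vertices other than $x$ and $y$) belongs to $X$. The set $X$ is a total mutual-visibility set of $G$ if every two vertices of $G$ are $X$-visible (the empty set is allowed). The total mutual-visibility number $\mu_t(G)$ is the maximum cardinality of a total mutual-visibility set of $G$. *)

(* Defs.v *)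
(* Simple graphs: a symmetric irreflexive relation e on a finType T. *)
From mathcomp Require Import all_boot.
From mathcomp Require Import boolp.
Set Implicit Arguments. Unset Strict Implicit. Unset Printing Implicit Defensive.

Section Graphs.
Variables (T : finType) (e : rel T).

Definition walk (x y : T) (p : seq T) : bool := path e x p && (last x p == y).

Definition shortest_path (x y : T) (p : seq T) : Prop :=
  walk x y p /\ forall q, walk x y q -> size p <= size q.

Definition internal (x : T) (p : seq T) : seq T := behead (belast x p).

Definition visible (X : {set T}) (x y : T) : Prop :=
  exists p, shortest_path x y p /\ all (fun v => v \notin X) (internal x p).

Definition total_mutual_visibility_set (X : {set T}) : Prop :=
  forall x y : T, visible X x y.

Definition mu_t : nat :=
  \max_(X : {set T} | `[< total_mutual_visibility_set X >]) #|X|.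

Definition complete_graph : Prop := forall x y : T, x != y -> e x y.

Definition dominating (D : {set T}) : bool :=
  [forall v, (v \in D) || [exists u in D, e u v]].

Definition domination_number : nat :=
  \big[minn/#|T|]_(D : {set T} | dominating D) #|D|.

Definition connected_graph : Prop := forall x y : T, connect e x y.

End Graphs.

(* Main.v *)
Require Import Defs.
From mathcomp Require Import all_boot.
From mathcomp Require Import boolp.
From mathcomp Require Import zify.
Set Implicit Arguments. Unset Strict Implicit. Unset Printing Implicit Defensive.

Section Aux.
Variables (T : finType) (e : rel T).
Hypotheses (e_sym : symmetric e) (e_irr : irreflexive e).

Lemma shortest_ex (x y : T) : connect e x y -> exists p, shortest_path e x y p.
Proof.
move=> /connectP [p pp ->].
have hex : exists n, `[< exists q, walk e x (last x p) q /\ size q = n >].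
  by exists (size p); apply/asboolP; exists p; rewrite /walk pp eqxx.
case: (ex_minnP hex) => m /asboolP [q [wq sq]] minm.
exists q; split=> // r wr; rewrite sq; apply: minm; apply/asboolP; by exists r.
Qed.

Lemma visible_short (X : {set T}) (x y : T) : x = y \/ e x y -> visible e X x y.
Proof.
case=> [<-|exy].
  exists [::]; split=> //; split; first by rewrite /walk /= eqxx.
  by [].
have nxy : x != y by apply/eqP=> E; move: exy; rewrite E e_irr.
exists [:: y]; split=> //; split; first by rewrite /walk /= exy eqxx.
case=> [|z q] //; rewrite /walk /= => /eqP E.
by move: nxy; rewrite E eqxx.
Qed.

Lemma visible_adj (X : {set T}) (x y : T) : [set~ x] \subset X -> visible e X x y -> x != y -> e x y.
Proof.
move=> sub [p [[/andP [pp /eqP lp] _] ai]] nxy.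
case: p pp lp ai => [|v1 [|v2 r]] /=.
- by move=> _ E; move: nxy; rewrite E eqxx.
- by rewrite andbT => exv <-.
- move=> /andP [exv _] _ /andP [hv _].
  have : v1 \notin [set~ x].
    by apply: contra hv; apply: (subsetP sub).
  rewrite !inE negbK => /eqP E; by move: exv; rewrite E e_irr.
Qed.

End Aux.

Lemma bigmin_le (I : eqType) (s : seq I) (P : pred I) (F : I -> nat) x i0 :
  i0 \in s -> P i0 -> \big[minn/x]_(i <- s | P i) F i <= F i0.
Proof.
elim: s => [|a s IH] //; rewrite inE big_cons => /orP [/eqP ->|ins] Pi.
  by rewrite Pi geq_minl.
case: (P a); last exact: IH.
by rewrite geq_min IH ?orbT.
Qed.


Theorem corollary2p3 (T : finType) (e : rel T)
    (e_sym : symmetric e) (e_irr : irreflexive e)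
    (T_nonempty : 0 < #|T|) (G_conn : connected_graph e) :
  (mu_t e = #|T| <-> complete_graph e) /\
  (mu_t e = #|T| - 1 <-> ~ complete_graph e /\ domination_number e = 1).
Proof.
have tmv0 : total_mutual_visibility_set e set0.
  move=> x y; case: (shortest_ex (G_conn x y)) => p sp; exists p; split=> //.
  by apply/allP=> v _; rewrite inE.
have mule : mu_t e <= #|T|.
  by apply/bigmax_leqP => X _; apply: max_card.
have lower : forall X, total_mutual_visibility_set e X -> #|X| <= mu_t e.
  by move=> X hX; rewrite /mu_t; apply: (@leq_bigmax_cond _ (fun X => `[< total_mutual_visibility_set e X >]) (fun X : {set T} => #|X|)); apply/asboolP.
have attain : exists2 X, total_mutual_visibility_set e X & mu_t e = #|X|.
  have c0 : 0 < #|[pred X : {set T} | `[< total_mutual_visibility_set e X >]]|.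
    by apply/card_gt0P; exists set0; rewrite inE; apply/asboolP.
  case: (eq_bigmax_cond (fun X : {set T} => #|X|) c0) => X.
  by rewrite inE => /asboolP hX E; exists X.
have compl_tmv : complete_graph e -> total_mutual_visibility_set e setT.
  move=> hc x y; apply: visible_short => //.
  by case: (eqVneq x y) => [->|/hc]; [left|right].
have partI : mu_t e = #|T| <-> complete_graph e.
  split.
    case: attain => X hX -> cX x y nxy.
    have XT : X = setT by apply/eqP; rewrite eqEcard subsetT cardsT cX leqnn.
    by apply: (visible_adj e_irr _ (hX x y) nxy); rewrite XT subsetT.
  move=> hc; apply/eqP; rewrite eqn_leq mule /=.
  by rewrite -cardsT; apply: lower; apply: compl_tmv.
split=> //.
have dom_ge1 : 1 <= domination_number e.
  rewrite /domination_number; apply: (big_ind (fun m => 1 <= m)) => //.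
    by move=> a b ha hb; rewrite leq_min ha hb.
  move=> D /forallP dD; case/card_gt0P: T_nonempty => v _.
  apply/card_gt0P; case/orP: (dD v) => [hv|/existsP [u /andP [hu _]]].
    by exists v. by exists u.
have dom1 : forall u, (forall v, v != u -> e u v) -> domination_number e = 1.
  move=> u hu; apply/eqP; rewrite eqn_leq dom_ge1 andbT.
  have dD : dominating e [set u].
    apply/forallP => v; case: (eqVneq v u) => [->|nvu]; first by rewrite inE eqxx.
    apply/orP; right; apply/existsP; exists u; by rewrite inE eqxx hu.
  rewrite /domination_number -(cards1 u).
  by apply: bigmin_le => //; rewrite mem_index_enum.
have dom_inv : domination_number e = 1 -> ~ complete_graph e ->
    exists u, forall v, v != u -> e u v.
  move=> hd nc.
  have : #|T| = 1 \/ exists2 D, dominating e D & #|D| = 1.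
    move: hd; rewrite /domination_number.
    apply: (big_ind (fun m => m = 1 -> #|T| = 1 \/ exists2 D, dominating e D & #|D| = 1)).
    - by left.
    - move=> a b ha hb; case: (leqP a b) => ab /=.
        exact: ha.
      exact: hb.
    - by move=> D dD cD; right; exists D.
  case=> [c1|[D dD /eqP/cards1P [u Du]]].
    exfalso; apply: nc => x y nxy; exfalso; move/negP: nxy; apply.
    have : #|T| <= 1 by rewrite c1.
    by move/card_le1_eqP => h; apply/eqP; apply: h.
  exists u => v nvu; move/forallP: dD => /(_ v); rewrite Du inE (negbTE nvu) /=.
  by case/existsP => w; rewrite inE => /andP [/eqP -> ].
split.
  move=> hm.
  have nc : ~ complete_graph e.
    move/partI => h; move: hm; rewrite h; lia.
  split=> //.
  case: attain => X hX cX.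
  have : #|~: X| == 1.
    by move: (cardsC X); rewrite -cX hm => E; apply/eqP; rewrite -(addnK (#|T| - 1) #|~: X|) addnC E subKn.
  case/cards1P => u Cu.
  have sub : [set~ u] \subset X.
    by apply/subsetP => v; rewrite !inE => nvu; apply: contraR nvu => nX; rewrite -in_set1 -Cu inE.
  apply: (dom1 u) => v nvu; apply: (visible_adj e_irr sub (hX u v)); by rewrite eq_sym.
case=> nc hd; case: (dom_inv hd nc) => u hu.
have tX : total_mutual_visibility_set e [set~ u].
  move=> x y; case: (eqVneq x y) => [->|nxy]; first by apply: (visible_short e_irr); left.
  case exy: (e x y); first by apply: (visible_short e_irr); right.
  have nxu : x != u.
    apply/eqP => xu; move: exy; rewrite xu hu //.
    by rewrite eq_sym -xu.
  have nyu : y != u.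
    apply/eqP => yu; move: exy; rewrite yu e_sym hu // -yu.
  exists [:: u; y]; split; last by rewrite /= !inE negbK eqxx.
  split; first by rewrite /walk /= e_sym (hu _ nxu) (hu _ nyu) eqxx.
  case=> [|z [|w q]] //; rewrite /walk /=.
  - by move/eqP => E; move: nxy; rewrite E eqxx.
  - by rewrite andbT => /andP [exz /eqP E]; move: exy; rewrite -E exz.
have := lower _ tX; rewrite cardsC1 => h1.
have hne : mu_t e != #|T| by apply/eqP => /partI.
rewrite subn1; apply/eqP; rewrite eqn_leq h1 andbT -ltnS prednK //.
by rewrite ltn_neqAle hne mule.
Qed.
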